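(* Let $\mathcal{A}$ be a strongly tight GFG-NRW whose language is recognized by some GFG-NBW. Then every state $q$ of $\mathcal{A}$ that appears in some good set of the acceptance condition does not belong to a rejecting cycle of $\mathcal{A}$.
   Context: An automaton $\langle\Sigma,Q,Q_0,\delta,\alpha\rangle$ has $\delta:Q\times\Sigma\to2^Q$; runs are accepting if the set of infinitely visited states satisfies $\alpha$. Rabin ($\alpha$ a set of pairs $\langle E,F\rangle$, $E$ the bad set, $F$ the good set): a set $S$ is accepting iff some pair has $S\cap E=\emptyset$ and $S\cap F\neq\emptyset$. A cycle of $\mathcal{A}$ is a sequence $q_0,\ldots,q_k$ with $q_0=q_k$ and $q_{i+1}\in\delta(q_i,a_i)$ for some letters $a_i$; it is rejecting if its set of states is not accepting. NRW/NBW: nondeterministic Rabin/Büchi word automaton. $\mathcal{A}$ is GFG if there is a strategy $g:\Sigma^*\to Q$ such that for every $w=a_1a_2\cdots$, $g(\epsilon),g(a_1),g(a_1a_2),\ldots$ is a run on $w$, accepting whenever $w\in L(\mathcal{A})$. Finite-state strategies are transducers $g=\langle\Sigma,Q,M,m_0,\rho,\tau\rangle$ (finite memories $M$, $\rho:M\times\Sigma\to M$ extended to words from $m_0$, $\tau:M\to Q$, $g(u)=\tau(\rho(u))$); $m$ is a memory of $q$ if $\tau(m)=q$. $\mathcal{A}_g=\langle\Sigma,M,m_0,\rho,\alpha_g\rangle$ where $\alpha_g$ replaces each set $F$ in $\alpha$ by $\{m\mid\tau(m)\in F\}$. A transition $\langle q,a,q'\rangle$ is used by $g$ if $q=g(u)$,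 $q'=g(ua)$ for some $u$. A combination of paths from a set $P$ of paths is the union of the element sets of a nonempty subset of $P$. For memories $m\neq m'$ with $\tau(m)=\tau(m')$, $m$ is replaceable by $m'$ if the set of paths of $\mathcal{A}_g$ from $m'$ to $m$ is empty or all its combinations are accepting. $\mathcal{A}$ is tight w.r.t. a finite-state strategy $g$ witnessing its GFGness if every transition is used by $g$ and no memory is replaceable by a different memory of the same state. A path of $\mathcal{A}_g$ is $q$-exclusive accepting if its memory set is accepting but that set minus the memories of $q$ is not. $\mathcal{A}$ is strongly tight if for some such $g$ it is tight w.r.t. $g$ and every state $q$ in some good set has a $q$-exclusive accepting cycle in $\mathcal{A}_g$. *)

(* Defs.v *)
From mathcomp Require Import all_boot.
Set Implicit Arguments. Unset Strict Implicit. Unset Printing Implicit Defensive.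

Section Automata.
Variable Sigma : finType.

Definition rabin_acc (T : finType) (alpha : seq ({set T} * {set T}))
    (S : T -> Prop) : Prop :=
  exists EF, EF \in alpha /\ (forall x, S x -> x \notin EF.1) /\
             (exists x, S x /\ x \in EF.2).

Definition buchi_acc (T : finType) (F : {set T}) (S : T -> Prop) : Prop :=
  exists x, S x /\ x \in F.

Definition inf_set (T : Type) (r : nat -> T) (x : T) : Prop :=
  forall n, exists m, n <= m /\ r m = x.

Record nrw (Q : finType) := NRW {
  nrw_init  : {set Q};
  nrw_delta : Q -> Sigma -> {set Q};
  nrw_alpha : seq ({set Q} * {set Q}) }.

Record nbw (Q : finType) := NBW {
  nbw_init  : {set Q};
  nbw_delta : Q -> Sigma -> {set Q};
  nbw_F     : {set Q} }.

Definition is_run (Q : finType) (init : {set Q}) (delta : Q -> Sigma -> {set Q})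
    (w : nat -> Sigma) (r : nat -> Q) : Prop :=
  r 0 \in init /\ forall i, r i.+1 \in delta (r i) (w i).

Definition nrw_lang (Q : finType) (A : nrw Q) (w : nat -> Sigma) : Prop :=
  exists r, is_run (nrw_init A) (nrw_delta A) w r /\
            rabin_acc (nrw_alpha A) (inf_set r).

Definition nbw_lang (Q : finType) (B : nbw Q) (w : nat -> Sigma) : Prop :=
  exists r, is_run (nbw_init B) (nbw_delta B) w r /\
            buchi_acc (nbw_F B) (inf_set r).

(* the run g(eps), g(a1), g(a1 a2), ... induced by a strategy on w;
   mkseq w i = [:: w 0; ...; w i.-1] = a1 ... ai *)
Definition strat_run (Q : Type) (g : seq Sigma -> Q) (w : nat -> Sigma) :
  nat -> Q := fun i => g (mkseq w i).

Definition gfg_strategy_nrw (Q : finType) (A : nrw Q) (g : seq Sigma -> Q) :=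
  forall w, is_run (nrw_init A) (nrw_delta A) w (strat_run g w) /\
            (nrw_lang A w -> rabin_acc (nrw_alpha A) (inf_set (strat_run g w))).

Definition gfg_strategy_nbw (Q : finType) (B : nbw Q) (g : seq Sigma -> Q) :=
  forall w, is_run (nbw_init B) (nbw_delta B) w (strat_run g w) /\
            (nbw_lang B w -> buchi_acc (nbw_F B) (inf_set (strat_run g w))).

Definition is_gfg_nbw (Q : finType) (B : nbw Q) : Prop :=
  exists g, gfg_strategy_nbw B g.

Definition fs_strat (Q M : finType) (m0 : M) (rho : M -> Sigma -> M)
    (tau : M -> Q) : seq Sigma -> Q :=
  fun u => tau (foldl rho m0 u).

Definition alpha_g (Q M : finType) (tau : M -> Q)
    (alpha : seq ({set Q} * {set Q})) : seq ({set M} * {set M}) :=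
  map (fun EF : {set Q} * {set Q} => ([set m | tau m \in EF.1], [set m | tau m \in EF.2])) alpha.

Definition g_edge (M : finType) (rho : M -> Sigma -> M) : rel M :=
  fun m m' => [exists a, m' == rho m a].

Definition a_edge (Q : finType) (delta : Q -> Sigma -> {set Q}) : rel Q :=
  fun q q' => [exists a, q' \in delta q a].

Definition g_path_from_to (M : finType) (rho : M -> Sigma -> M) (m1 m2 : M)
    (s : seq M) : Prop :=
  exists p, s = m1 :: p /\ path (g_edge rho) m1 p /\ last m1 p = m2.

Definition replaceable (Q M : finType) (alpha : seq ({set Q} * {set Q}))
    (rho : M -> Sigma -> M) (tau : M -> Q) (m m' : M) : Prop :=
  m <> m' /\ tau m = tau m' /\
  ((forall s, ~ g_path_from_to rho m' m s) \/
   (forall P : seq M -> Prop,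
      (exists s, P s) -> (forall s, P s -> g_path_from_to rho m' m s) ->
      rabin_acc (alpha_g tau alpha) (fun x => exists s, P s /\ x \in s))).

Definition used (Q : finType) (g : seq Sigma -> Q) (q : Q) (a : Sigma) (q' : Q) :=
  exists u, q = g u /\ q' = g (rcons u a).

Definition tight_wrt (Q M : finType) (A : nrw Q) (m0 : M)
    (rho : M -> Sigma -> M) (tau : M -> Q) : Prop :=
  (forall q a q', q' \in nrw_delta A q a -> used (fs_strat m0 rho tau) q a q') /\
  (forall m m', m <> m' -> tau m = tau m' -> ~ replaceable (nrw_alpha A) rho tau m m').

Definition q_exclusive_accepting_cycle (Q M : finType) (alpha : seq ({set Q} * {set Q}))
    (rho : M -> Sigma -> M) (tau : M -> Q) (q : Q) : Prop :=
  exists (m : M) (p : seq M),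
    p != [::] /\ path (g_edge rho) m p /\ last m p = m /\
    rabin_acc (alpha_g tau alpha) (fun x => x \in m :: p) /\
    ~ rabin_acc (alpha_g tau alpha) (fun x => x \in m :: p /\ tau x <> q).

Definition in_good_set (Q : finType) (A : nrw Q) (q : Q) : Prop :=
  exists EF, EF \in nrw_alpha A /\ q \in EF.2.

Definition strongly_tight (Q : finType) (A : nrw Q) : Prop :=
  exists (M : finType) (m0 : M) (rho : M -> Sigma -> M) (tau : M -> Q),
    gfg_strategy_nrw A (fs_strat m0 rho tau) /\
    tight_wrt A m0 rho tau /\
    (forall q, in_good_set A q ->
       q_exclusive_accepting_cycle (nrw_alpha A) rho tau q).

Definition on_rejecting_cycle (Q : finType) (A : nrw Q) (q : Q) : Prop :=
  exists (q0 : Q) (p : seq Q),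
    p != [::] /\ path (a_edge (nrw_delta A)) q0 p /\ last q0 p = q0 /\
    q \in q0 :: p /\
    ~ rabin_acc (nrw_alpha A) (fun x => x \in q0 :: p).

End Automata.

(* Main.v *)
Require Import Defs.
From mathcomp Require Import all_boot.
From Stdlib Require Import Classical IndefiniteDescription.
Set Implicit Arguments. Unset Strict Implicit. Unset Printing Implicit Defensive.


Section Walks.
Variables (Sigma M : finType) (rho : M -> Sigma -> M).

Fixpoint vis (x : M) (w : seq Sigma) : seq M :=
  match w with [::] => [:: x] | a :: w' => x :: vis (rho x a) w' end.

Lemma vis_head x w : x \in vis x w.
Proof. by case: w => [|a w] /=; rewrite in_cons eqxx. Qed.

Lemma size_vis x w : size (vis x w) = (size w).+1.
Proof. by elim: w x => [|a w IH] x //=; rewrite IH. Qed.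

Lemma vis_cat x w1 w2 y :
  (y \in vis x (w1 ++ w2)) = (y \in vis x w1) || (y \in vis (foldl rho x w1) w2).
Proof.
elim: w1 x => [|a w1 IH] x /=.
  case: (boolP (y == x)) => [/eqP ->|Hn]; first by rewrite vis_head inE eqxx.
  by rewrite inE (negbTE Hn).
by rewrite !in_cons IH orbA.
Qed.

Lemma vis_take x w y :
  y \in vis x w <-> exists2 r, r <= size w & y = foldl rho x (take r w).
Proof.
elim: w x y => [|a w IH] x y /=.
  rewrite mem_seq1; split; first by move/eqP ->; exists 0.
  by case=> r _ ->.
rewrite in_cons; split.
  case/orP=> [/eqP ->|]; first by exists 0.
  by move=> /(IH (rho x a)) [r Hr ->]; exists r.+1.
case=> [[|r]] /= Hr ->; first by rewrite eqxx.
have Hm : foldl rho (rho x a) (take r w) \in vis (rho x a) w by apply (IH (rho x a)); exists r.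
by rewrite Hm orbT.
Qed.

Lemma vis_last x w : foldl rho x w \in vis x w.
Proof. by apply/vis_take; exists (size w) => //; rewrite take_size. Qed.

Definition vpow (v : seq Sigma) n := flatten (nseq n v).

Lemma vpowS v n : vpow v n.+1 = v ++ vpow v n.
Proof. by []. Qed.

Lemma vpowSr v n : vpow v n.+1 = vpow v n ++ v.
Proof.
elim: n => [|n IH]; first by rewrite /vpow /= cats0.
by rewrite [in LHS](vpowS v n.+1) [in LHS]IH catA.
Qed.

Lemma size_vpow v n : size (vpow v n) = n * size v.
Proof. by elim: n => [|n IH] //; rewrite vpowS size_cat IH mulSn. Qed.

Lemma foldl_vpow x v n : foldl rho x v = x -> foldl rho x (vpow v n) = x.
Proof. by move=> H; elim: n => [|n IH] //; rewrite vpowS foldl_cat H. Qed.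

Lemma vis_vpow x v n y : foldl rho x v = x -> y \in vis x (vpow v n) -> y \in vis x v.
Proof.
move=> H; elim: n => [|n IH] /=.
  by rewrite mem_seq1 => /eqP ->; apply: vis_head.
by rewrite vpowS vis_cat H => /orP [] // /IH.
Qed.

Lemma path_word x p : path (g_edge rho) x p ->
  exists w, vis x w = x :: p /\ foldl rho x w = last x p.
Proof.
elim: p x => [|y p IH] x /=; first by move=> _; exists [::].
case/andP=> /existsP [a /eqP Hy] /IH [w [H1 H2]].
by exists (a :: w); rewrite /= -Hy H1 H2.
Qed.

Lemma gpath_word x y s : g_path_from_to rho x y s ->
  exists w, vis x w = s /\ foldl rho x w = y.
Proof.
case=> p [-> [Hp Hl]]; case: (path_word Hp) => w [H1 H2].
by exists w; rewrite H1 H2.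
Qed.

End Walks.

Lemma take_addn (T : Type) (s1 s2 : seq T) r :
  take (size s1 + r) (s1 ++ s2) = s1 ++ take r s2.
Proof. by rewrite take_cat ltnNge leq_addr /= addKn. Qed.

Section Lim.
Variables (Sigma : Type) (a0 : Sigma) (pref : nat -> seq Sigma).
Hypothesis chain : forall n, exists r, pref n.+1 = pref n ++ r.
Hypothesis big : forall n, n <= size (pref n).

Definition limw i := nth a0 (pref i.+1) i.

Lemma chain_le n n' : n <= n' -> exists r, pref n' = pref n ++ r.
Proof.
elim: n' => [|n' IH]; first by rewrite leqn0 => /eqP ->; exists [::]; rewrite cats0.
rewrite leq_eqVlt => /orP [/eqP ->|]; first by exists [::]; rewrite cats0.
rewrite ltnS => /IH [r Hr]; case: (chain n') => r' ->.
by exists (r ++ r'); rewrite Hr catA.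
Qed.

Lemma nth_pref i n n' : i < size (pref n) -> i < size (pref n') ->
  nth a0 (pref n) i = nth a0 (pref n') i.
Proof.
move=> H1 H2; case: (leqP n n') => Hn.
  by case: (chain_le Hn) => r ->; rewrite nth_cat H1.
by case: (chain_le (ltnW Hn)) => r ->; rewrite nth_cat H2.
Qed.

Lemma lim_take k n : k <= size (pref n) -> mkseq limw k = take k (pref n).
Proof.
move=> Hk; apply: (@eq_from_nth _ a0); first by rewrite size_mkseq size_takel.
move=> i; rewrite size_mkseq => Hi.
rewrite nth_mkseq // nth_take // /limw; apply: nth_pref.
  exact: big.
exact: leq_trans Hi Hk.
Qed.
End Lim.

Lemma pigeon (T : finType) (r : nat -> T) (P : pred T) :
  (forall n, exists m, n <= m /\ P (r m)) -> exists x, P x /\ inf_set r x.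
Proof.
move=> H.
suff: forall s : seq T, (forall n, exists m, n <= m /\ r m \in s) ->
        exists x, x \in s /\ inf_set r x.
  move/(_ [seq x <- enum T | P x]); case.
    by move=> n; case: (H n) => m [H1 H2]; exists m; rewrite mem_filter H2 mem_enum.
  by move=> x; rewrite mem_filter => [[/andP [Px _] Hx]]; exists x.
elim=> [|x s IH] Hs; first by case: (Hs 0) => m [].
case: (classic (inf_set r x)) => Hx; first by exists x; rewrite in_cons eqxx.
have [N HN] : exists N, forall m, N <= m -> r m <> x.
  apply: NNPP => Hn; apply: Hx => n; apply: NNPP => Hn'; apply: Hn; exists n.
  by move=> m Hm Hr; apply: Hn'; exists m.
case: IH => [n|y [Hy Hi]]; last by exists y; rewrite in_cons Hy orbT.
case: (Hs (maxn n N)) => m [Hm]; rewrite in_cons => /orP [/eqP Hr|Hr].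
  by case: (HN m) => //; apply: leq_trans Hm; apply: leq_maxr.
by exists m; split=> //; apply: leq_trans Hm; apply: leq_maxl.
Qed.

Lemma rabin_g_iff (Q M : finType) (tau : M -> Q) alpha (V : M -> Prop) :
  rabin_acc (alpha_g tau alpha) V <->
  exists EF, EF \in alpha /\ (forall y, V y -> tau y \notin EF.1) /\
             (exists y, V y /\ tau y \in EF.2).
Proof.
split.
  case=> EF' [/mapP [EF HEF ->] [H1 [y [Vy Hy]]]]; exists EF; split=> //; split.
    by move=> z /H1; rewrite inE.
  by exists y; rewrite inE in Hy.
case=> EF [HEF [H1 [y [Vy Hy]]]].
exists ([set m | tau m \in EF.1], [set m | tau m \in EF.2]); split.
  by apply/mapP; exists EF.
split; first by move=> z /H1; rewrite inE.
by exists y; rewrite inE.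
Qed.


Section BT.
Variables (Sigma Q M Q' : finType) (A : nrw Sigma Q) (B : nbw Sigma Q').
Variables (m0 : M) (rho : M -> Sigma -> M) (tau : M -> Q) (h : seq Sigma -> Q').
Hypothesis HgA : gfg_strategy_nrw A (fs_strat m0 rho tau).
Hypothesis HgB : gfg_strategy_nbw B h.
Hypothesis Heq : forall w, nrw_lang A w <-> nbw_lang B w.
Variables (a0 : Sigma) (u v t : seq Sigma) (m : M).
Hypothesis Hu : foldl rho m0 u = m.
Hypothesis Hv : foldl rho m v = m.
Hypothesis Hv0 : 0 < size v.
Hypothesis Ht : foldl rho m t = m.
Hypothesis HD : rabin_acc (alpha_g tau (nrw_alpha A)) (fun y => y \in vis rho m v).

Let per pre := limw a0 (fun n => pre ++ vpow v n).

Lemma per_chain pre n : exists r, pre ++ vpow v n.+1 = (pre ++ vpow v n) ++ r.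
Proof. by exists v; rewrite vpowSr catA. Qed.

Lemma per_big pre n : n <= size (pre ++ vpow v n).
Proof.
rewrite size_cat size_vpow; apply: leq_trans (leq_addl _ _).
by rewrite -{1}(muln1 n) leq_mul2l Hv0 orbT.
Qed.

Lemma per_take pre k n : k <= size (pre ++ vpow v n) ->
  mkseq (per pre) k = take k (pre ++ vpow v n).
Proof. exact: lim_take (per_chain pre) (per_big pre) k n. Qed.

Lemma per_in_L pre : foldl rho m0 pre = m -> nrw_lang A (per pre).
Proof.
move=> Hpre; exists (strat_run (fs_strat m0 rho tau) (per pre)).
split; first exact: (HgA _).1.
case/rabin_g_iff: HD => EF [HEF [H1 [y [Hy HyF]]]].
exists EF; split=> //; split.
  move=> x /(_ (size pre)) [i [Hi <-]].
  rewrite /strat_run /fs_strat (per_take (n:=i)); last exact: per_big.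
  have -> : take i (pre ++ vpow v i) = pre ++ take (i - size pre) (vpow v i)
    by rewrite -{1}(subnKC Hi) take_addn.
  rewrite foldl_cat Hpre; apply: H1.
  apply: (vis_vpow (n := i)) => //; apply/vis_take.
  exists (i - size pre) => //.
  by rewrite size_vpow; apply: leq_trans (leq_subr _ _) _; rewrite leq_pmulr.
exists (tau y); split=> //.
case/vis_take: Hy => r Hr ->.
move=> n; exists (size pre + (size (vpow v n) + r)); split.
  apply: (leq_trans _ (leq_addl (size pre) _)); apply: (leq_trans _ (leq_addr r _)).
  by rewrite size_vpow leq_pmulr.
rewrite /strat_run /fs_strat (per_take (n:=n.+1)); last first.
  by rewrite vpowSr !size_cat leq_add2l leq_add2l.
by rewrite vpowSr take_addn take_addn foldl_cat Hpre foldl_cat foldl_vpow.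
Qed.

Lemma le_j pre j : j <= size (pre ++ vpow v j.+1).
Proof.
rewrite size_cat size_vpow; apply: leq_trans (leq_addl _ _).
by apply: ltnW; rewrite leq_pmulr.
Qed.

Lemma exN pre : exists N, foldl rho m0 pre = m -> 0 < N /\
  exists j, size pre <= j <= size (pre ++ vpow v N) /\ h (take j (pre ++ vpow v N)) \in nbw_F B.
Proof.
case: (boolP (foldl rho m0 pre == m)) => [/eqP Hpre|Hn]; last first.
  by exists 0 => H; rewrite H eqxx in Hn.
have := (HgB (per pre)).2 ((Heq _).1 (per_in_L Hpre)).
case=> x [Hinf HxF]; case: (Hinf (size pre)) => j [Hj Hjx].
exists j.+1 => _; split=> //; exists j; split; first by rewrite Hj le_j.
rewrite -(per_take (n := j.+1)); last exact: le_j.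
by move: HxF; rewrite -Hjx.
Qed.

Definition Nf pre := proj1_sig (constructive_indefinite_description _ (exN pre)).
Lemma NfP pre : foldl rho m0 pre = m -> 0 < Nf pre /\
  exists j, size pre <= j <= size (pre ++ vpow v (Nf pre)) /\
            h (take j (pre ++ vpow v (Nf pre))) \in nbw_F B.
Proof. exact: (proj2_sig (constructive_indefinite_description _ (exN pre))). Qed.

Fixpoint stage n := match n with 0 => u | n'.+1 => stage n' ++ (vpow v (Nf (stage n')) ++ t) end.

Lemma stageS n : stage n.+1 = stage n ++ (vpow v (Nf (stage n)) ++ t).
Proof. by []. Qed.

Lemma stage_m n : foldl rho m0 (stage n) = m.
Proof.
elim: n => [|n IH] //; by rewrite stageS !foldl_cat IH foldl_vpow.
Qed.

Lemma stage_chain n : exists r, stage n.+1 = stage n ++ r.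
Proof. by eexists; rewrite stageS. Qed.

Lemma Npos n : 0 < Nf (stage n).
Proof. by case: (NfP (stage_m n)). Qed.

Lemma stage_big n : n <= size (stage n).
Proof.
elim: n => [|n IH] //; rewrite stageS !size_cat size_vpow -addn1.
apply: leq_add => //; apply: leq_trans (leq_addr _ _).
by rewrite muln_gt0 Npos Hv0.
Qed.

Let W := limw a0 stage.

Lemma W_take k n : k <= size (stage n) -> mkseq W k = take k (stage n).
Proof. exact: lim_take stage_chain stage_big k n. Qed.

Lemma W_in_B : nbw_lang B W.
Proof.
exists (strat_run h W); split; first exact: (HgB W).1.
have Hp : forall n, exists j, n <= j /\ (strat_run h W j \in nbw_F B).
  move=> n; case: (NfP (stage_m n)) => _ [j [/andP [Hj1 Hj2] HjF]].
  exists j; split; first exact: leq_trans (stage_big n) Hj1.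
  rewrite /strat_run (W_take (n := n.+1)).
    by rewrite stageS catA takel_cat.
  by rewrite stageS catA size_cat; apply: leq_trans Hj2 (leq_addr _ _).
have [x [Hx Hinf]] := pigeon Hp.
by exists x.
Qed.

Lemma locate i : size u <= i -> exists n, size (stage n) <= i <= size (stage n.+1).
Proof.
move=> Hi; suff: forall K, i <= size (stage K) -> exists n, size (stage n) <= i <= size (stage n.+1).
  by apply; apply: leq_trans (stage_big i) _.
elim=> [|K IH] HK.
  exists 0; apply/andP; split => //; apply: leq_trans HK _.
  by rewrite stageS size_cat leq_addr.
case: (leqP i (size (stage K))) => H; first exact: IH.
by exists K; rewrite (ltnW H) HK.
Qed.

Lemma buchi_type :
  rabin_acc (alpha_g tau (nrw_alpha A)) (fun y => y \in vis rho m v \/ y \in vis rho m t).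
Proof.
have gacc := (HgA W).2 ((Heq W).2 W_in_B).
apply/rabin_g_iff; case: gacc => EF [HEF [H1 [x [Hx HxF]]]].
exists EF; split=> //; split.
  move=> y Hy; apply: H1 => n.
  have NP := Npos n; set N := Nf (stage n) in NP.
  case: Hy => /vis_take [r Hr ->].
    exists (size (stage n) + r); split; first exact: leq_trans (stage_big n) (leq_addr _ _).
    rewrite /strat_run /fs_strat (W_take (n := n.+1)); last first.
      rewrite stageS size_cat leq_add2l size_cat size_vpow.
      apply: leq_trans (leq_addr _ _); apply: leq_trans Hr _; exact: leq_pmull.
    rewrite stageS take_addn -/N; case: N NP => [|N'] // _.
    by rewrite vpowS -catA takel_cat // foldl_cat stage_m.
  exists (size (stage n) + (size (vpow v N) + r)); split.
    by apply: leq_trans (stage_big n) (leq_addr _ _).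
  rewrite /strat_run /fs_strat (W_take (n := n.+1)); last first.
    by rewrite stageS size_cat leq_add2l size_cat leq_add2l.
  by rewrite stageS take_addn take_addn !foldl_cat stage_m foldl_vpow.
case: (Hx (size u)) => i [Hi Hix].
exists (foldl rho m0 (mkseq W i)); split; last by move: HxF; rewrite -Hix.
case: (locate Hi) => n /andP [Hn1 Hn2].
rewrite (W_take Hn2) stageS -(subnKC Hn1) take_addn foldl_cat stage_m.
have Hd : i - size (stage n) <= size (vpow v (Nf (stage n)) ++ t).
  by rewrite leq_subLR -size_cat -stageS.
have : foldl rho m (take (i - size (stage n)) (vpow v (Nf (stage n)) ++ t))
   \in vis rho m (vpow v (Nf (stage n)) ++ t).
  by apply (proj2 (vis_take _ _ _ _)); exists (i - size (stage n)).
rewrite vis_cat (foldl_vpow _ Hv) => /orP [/vis_vpow H|H]; [left; exact: (H Hv)|by right].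
Qed.
End BT.


Section Cyc.
Variables (Sigma Q M : finType) (A : nrw Sigma Q) (m0 : M) (rho : M -> Sigma -> M) (tau : M -> Q).
Hypothesis Htight : tight_wrt A m0 rho tau.
Variables (q0 : Q) (pC : seq Q).
Hypothesis HpathC : path (a_edge (nrw_delta A)) q0 pC.
Hypothesis HrejC : ~ rabin_acc (nrw_alpha A) (fun x => x \in q0 :: pC).

Definition Good (V : M -> Prop) := forall EF, EF \in nrw_alpha A ->
  (forall y, V y -> tau y \notin EF.1) -> (forall x, x \in q0 :: pC -> x \notin EF.1) ->
  ~ (exists y, V y /\ tau y \in EF.2).

Lemma Good_union (V V1 V2 : M -> Prop) :
  (forall y, V y <-> V1 y \/ V2 y) -> Good V1 -> Good V2 -> Good V.
Proof.
move=> HV G1 G2 EF HEF HE HC [y [Vy Hy]].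
case: (proj1 (HV y) Vy) => [V1y|V2y].
  apply: (G1 EF HEF _ HC); last by exists y.
  by move=> z Hz; apply: HE; apply/HV; left.
apply: (G2 EF HEF _ HC); last by exists y.
by move=> z Hz; apply: HE; apply/HV; right.
Qed.

Lemma Good_rej (V : M -> Prop) : ~ rabin_acc (alpha_g tau (nrw_alpha A)) V -> Good V.
Proof.
move=> Hr EF HEF HE _ Hy; apply: Hr; apply/rabin_g_iff; exists EF; split=> //.
Qed.

Lemma C_noF EF : EF \in nrw_alpha A -> (forall x, x \in q0 :: pC -> x \notin EF.1) ->
  forall x, x \in q0 :: pC -> x \notin EF.2.
Proof.
move=> HEF HC x Hx; apply/negP => HxF; apply: HrejC; exists EF; split=> //; split=> //.
by exists x.
Qed.

Lemma Good_C (V : M -> Prop) : (forall y, V y -> tau y \in q0 :: pC) -> Good V.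
Proof.
move=> HV EF HEF _ HC [y [Vy Hy]].
by move: (C_noF HEF HC (HV y Vy)); rewrite Hy.
Qed.

Lemma nonrepl a b : a <> b -> tau a = tau b ->
  exists P : seq M -> Prop, (exists s, P s) /\
    (forall s, P s -> g_path_from_to rho b a s) /\ Good (fun z => exists s, P s /\ z \in s).
Proof.
move=> Hab Htab; have Hn := Htight.2 a b Hab Htab.
apply: NNPP => Hno; apply: Hn; split=> //; split=> //.
right=> P HPne HPpath; apply: NNPP => Hr; apply: Hno; exists P; split=> //; split=> //.
exact: Good_rej.
Qed.

Lemma conn x y : tau x = tau y -> tau x \in q0 :: pC ->
  exists w, foldl rho x w = y /\ Good (fun z => z \in vis rho x w).
Proof.
move=> Hxy Hxs; case: (eqVneq x y) => [<-|Hne].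
  exists [::]; split=> //; apply: Good_C => z /=; rewrite mem_seq1 => /eqP -> //.
have Hyx : y <> x by move=> E; rewrite E eqxx in Hne.
have Hxy' : x <> y by move=> E; rewrite E eqxx in Hne.
have [P [[s0 Ps0] [HP GP]]] := nonrepl Hyx (esym Hxy).
have [P' [[s1 Ps1] [HP' GP']]] := nonrepl Hxy' Hxy.
pose U := fun z => (exists s, P s /\ z \in s) \/ (exists s, P' s /\ z \in s).
have GU : Good U by apply: (Good_union (fun _ => iff_refl _)).
have pair : forall sa sb, P sa -> P' sb -> exists c, foldl rho x c = x /\
    (forall z, z \in vis rho x c -> U z) /\ (forall z, z \in sa \/ z \in sb -> z \in vis rho x c).
  move=> sa sb Psa Psb.
  have [wa [Hwa1 Hwa2]] := gpath_word (HP sa Psa).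
  have [wb [Hwb1 Hwb2]] := gpath_word (HP' sb Psb).
  exists (wa ++ wb); split; first by rewrite foldl_cat Hwa2.
  split.
    move=> z; rewrite vis_cat Hwa2 Hwa1 Hwb1 => /orP [Hz|Hz].
      by left; exists sa.
    by right; exists sb.
  by move=> z; rewrite vis_cat Hwa2 Hwa1 Hwb1 => [[->|->]] //; rewrite orbT.
have cover : forall zs : seq M, exists w, foldl rho x w = x /\
    (forall z, z \in vis rho x w -> U z) /\ (forall z, z \in zs -> U z -> z \in vis rho x w).
  elim=> [|z zs [w [Hw1 [Hw2 Hw3]]]].
    exists [::]; split=> //; split=> // z; rewrite /= mem_seq1 => /eqP ->; left.
    exists s0; split=> //; case: (HP s0 Ps0) => p [-> _]; exact: mem_head.
  case: (classic (U z)) => Uz; last first.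
    exists w; split=> //; split=> // z'; rewrite in_cons => /orP [/eqP ->|]; first by [].
    exact: Hw3.
  have [c [Hc1 [Hc2 Hc3]]] : exists c, foldl rho x c = x /\
    (forall z, z \in vis rho x c -> U z) /\ z \in vis rho x c.
    case: Uz => [[sa [Psa Hz]]|[sb [Psb Hz]]].
      have [c [H1 [H2 H3]]] := pair sa s1 Psa Ps1.
      by exists c; split=> //; split=> //; apply: H3; left.
    have [c [H1 [H2 H3]]] := pair s0 sb Ps0 Psb.
    by exists c; split=> //; split=> //; apply: H3; right.
  exists (w ++ c); split; first by rewrite foldl_cat Hw1.
  split.
    by move=> z'; rewrite vis_cat Hw1 => /orP [/Hw2|/Hc2].
  move=> z'; rewrite in_cons vis_cat Hw1 => /orP [/eqP ->|Hz'] Uz'; first by rewrite Hc3 orbT.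
  by rewrite Hw3.
have [wc [Hwc1 [Hwc2 Hwc3]]] := cover (enum M).
have [wa [Hwa1 Hwa2]] := gpath_word (HP s0 Ps0).
exists (wc ++ wa); split; first by rewrite foldl_cat Hwc1.
apply: (Good_union (V1 := U) (V2 := U)) => // z; split.
  rewrite vis_cat Hwc1 Hwa1 => /orP [/Hwc2|Hz]; first by left.
  by left; left; exists s0.
by case=> Uz; rewrite vis_cat Hwc3 ?mem_enum.
Qed.

Lemma edge_mem l : l < size pC -> exists mx a, tau mx = nth q0 (q0 :: pC) l /\
  tau (rho mx a) = nth q0 (q0 :: pC) l.+1 /\ exists u, foldl rho m0 u = mx.
Proof.
move=> Hl; move/(pathP q0): HpathC => Hp.
case/existsP: (Hp l Hl) => a Ha.
have [uu [H1 H2]] := Htight.1 _ _ _ Ha.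
exists (foldl rho m0 uu), a; split; first by rewrite H1.
split; last by exists uu.
by rewrite /= H2 /fs_strat foldl_rcons.
Qed.

Lemma qi_in i : i <= size pC -> nth q0 (q0 :: pC) i \in q0 :: pC.
Proof. by move=> Hi; apply: mem_nth. Qed.

Lemma segment l i : i <= l -> l <= size pC -> forall x y,
  tau x = nth q0 (q0 :: pC) i -> tau y = nth q0 (q0 :: pC) l ->
  exists w, foldl rho x w = y /\ Good (fun z => z \in vis rho x w) /\
    (forall j, i <= j <= l -> exists2 z, z \in vis rho x w & tau z = nth q0 (q0 :: pC) j).
Proof.
have base : forall i0 x0 y0, i0 <= size pC -> tau x0 = nth q0 (q0 :: pC) i0 ->
    tau y0 = nth q0 (q0 :: pC) i0 ->
    exists w, foldl rho x0 w = y0 /\ Good (fun z => z \in vis rho x0 w) /\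
    (forall j, i0 <= j <= i0 -> exists2 z, z \in vis rho x0 w & tau z = nth q0 (q0 :: pC) j).
  move=> i0 x0 y0 Hik Hx Hy.
  have Hxs : tau x0 \in q0 :: pC by rewrite Hx qi_in.
  have [w [Hw G]] := conn (etrans Hx (esym Hy)) Hxs.
  exists w; split=> //; split=> // j; rewrite -eqn_leq => /eqP <-.
  by exists y0 => //; rewrite -Hw vis_last.
elim: l i => [|l IH] i Hil Hlk x y Hx Hy.
  move: Hil; rewrite leqn0 => /eqP Ei; subst i; exact: base.
case: (eqVneq i l.+1) => [Ei|Ni]; first by subst i; exact: base.
have Hil' : i <= l by rewrite -ltnS ltn_neqAle Ni Hil.
have [mx [a [Hmx [Hma _]]]] := edge_mem Hlk.
have [w1 [Hw1 [G1 C1]]] := IH i Hil' (ltnW Hlk) x mx Hx Hmx.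
have Hs : tau (rho mx a) \in q0 :: pC by rewrite Hma qi_in.
have [w3 [Hw3 G3]] := conn (etrans Hma (esym Hy)) Hs.
exists (w1 ++ a :: w3); split; first by rewrite foldl_cat Hw1 /= Hw3.
split.
  apply: (Good_union (V1 := fun z => z \in vis rho x w1)
                     (V2 := fun z => z \in vis rho mx (a :: w3))) => //.
    by move=> z; rewrite vis_cat Hw1; split=> [/orP|[]->]; rewrite ?orbT.
  apply: (Good_union (V1 := fun z => z = mx) (V2 := fun z => z \in vis rho (rho mx a) w3)) => //.
    by move=> z; rewrite /= in_cons; split=> [/orP [/eqP|]|[->|->]]; rewrite ?eqxx ?orbT; auto.
  by apply: Good_C => z ->; rewrite Hmx qi_in // ltnW.
move=> j /andP [Hj1 Hj2].
case: (leqP j l) => Hjl.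
  have [z Hz Hzj] := C1 j (introT andP (conj Hj1 Hjl)).
  by exists z => //; rewrite vis_cat Hz.
have -> : j = l.+1 by apply/eqP; rewrite eqn_leq Hj2 Hjl.
by exists y => //; rewrite -{1}(_ : foldl rho x (w1 ++ a :: w3) = y) ?vis_last // foldl_cat Hw1 /= Hw3.
Qed.
End Cyc.


Unset Implicit Arguments.

Theorem lemma16 (Sigma Q : finType) (A : nrw Sigma Q) :
  strongly_tight A ->
  (exists (Q' : finType) (B : nbw Sigma Q'),
     is_gfg_nbw B /\ (forall w, nrw_lang A w <-> nbw_lang B w)) ->
  forall q : Q, in_good_set A q -> ~ on_rejecting_cycle A q.
Proof.
move=> [M [m0 [rho [tau [HgA [Htight Hexcl]]]]]] [Q' [B [[h HgB] Heq]]] q Hgood.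
move=> [q0 [pC [HpC0 [HpathC [HlastC [HqC HrejC]]]]]].
have [m [pD [HpD0 [HpathD [HlastD [HaccD HnotD]]]]]] := Hexcl q Hgood.
have [v [Hvis Hv]] := path_word HpathD; rewrite HlastD in Hv.
have Hv0 : 0 < size v.
  have := size_vis rho m v; rewrite Hvis /= => -[<-].
  by rewrite lt0n size_eq0.
have [a0 _] : exists a : Sigma, True by case: v Hv0 {Hvis Hv} => [|a] //; exists a.
have [mD [HmD HmDq]] : exists mD, mD \in m :: pD /\ tau mD = q.
  apply: NNPP => Hn; apply: HnotD.
  case/rabin_g_iff: HaccD => EF [HEF [H1 [y [Hy HyF]]]].
  apply/rabin_g_iff; exists EF; split=> //; split.
    by move=> z [Hz _]; exact: H1.
  by exists y; split=> //; split=> // Hyq; apply: Hn; exists y.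
rewrite -Hvis in HmD; case/vis_take: HmD => r Hr HmDr.
pose v1 := take r v; pose v2 := drop r v.
have Hv12 : v = v1 ++ v2 by rewrite cat_take_drop.
have Hfv1 : foldl rho m v1 = mD by rewrite HmDr.
have Hfv2 : foldl rho mD v2 = m by rewrite -Hfv1 -foldl_cat -Hv12.
pose k := size pC.
have Hj : index q (q0 :: pC) <= k by rewrite -ltnS -[k.+1]/(size (q0 :: pC)) index_mem.
have Hqj : nth q0 (q0 :: pC) (index q (q0 :: pC)) = q by rewrite nth_index.
have Hqk : nth q0 (q0 :: pC) k = q0 by have := nth_last q0 (q0 :: pC); rewrite /= HlastC.
have Hk0 : 0 < k by rewrite lt0n size_eq0.
have [mx [a [Hmx [_ [uu Huu]]]]] := edge_mem Htight HpathC Hk0.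
have HmDj : tau mD = nth q0 (q0 :: pC) (index q (q0 :: pC)) by rewrite HmDq Hqj.
have [w1 [Hw1 [G1 C1]]] := segment Htight HpathC HrejC Hj (leqnn k) HmDj (etrans Hmx (esym Hqk)).
have [w2 [Hw2 [G2 C2]]] := segment Htight HpathC HrejC (leq0n _) Hj Hmx HmDj.
pose t' := w1 ++ w2.
have Ht' : foldl rho mD t' = mD by rewrite foldl_cat Hw1 Hw2.
pose u := uu ++ w2 ++ v2.
have Hu : foldl rho m0 u = m by rewrite !foldl_cat Huu Hw2 Hfv2.
pose t := v1 ++ t' ++ v2.
have Ht : foldl rho m t = m by rewrite /t foldl_cat Hfv1 foldl_cat Ht' Hfv2.
have HaccD' : rabin_acc (alpha_g tau (nrw_alpha A)) (fun y => y \in vis rho m v).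
  by rewrite Hvis.
have BT := buchi_type HgA HgB Heq a0 Hu Hv Hv0 Ht HaccD'.
case/rabin_g_iff: BT => EF [HEF [HE [y [Hy HyF]]]].
have Ht'sub : forall z, z \in vis rho mD t' -> z \in vis rho m t.
  by move=> z Hz; rewrite vis_cat Hfv1 vis_cat Hz orbT.
have Gt' : Good A tau q0 pC (fun z => z \in vis rho mD t').
  apply: (Good_union (V1 := fun z => z \in vis rho mD w1)
                     (V2 := fun z => z \in vis rho mx w2)) => // z.
  by rewrite vis_cat Hw1; split=> [/orP|[]->]; rewrite ?orbT.
have Gt'E : forall z, z \in vis rho mD t' -> tau z \notin EF.1.
  by move=> z Hz; apply: HE; right; apply: Ht'sub.
have CE : forall x, x \in q0 :: pC -> x \notin EF.1.
  move=> x Hx; rewrite -(nth_index q0 Hx).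
  have Hix : index x (q0 :: pC) <= k by rewrite -ltnS -[k.+1]/(size (q0 :: pC)) index_mem.
  case: (leqP (index x (q0 :: pC)) (index q (q0 :: pC))) => Hle.
    have [z Hz <-] := C2 _ (introT andP (conj (leq0n _) Hle)).
    by apply: Gt'E; rewrite vis_cat Hw1 Hz orbT.
  have [z Hz <-] := C1 _ (introT andP (conj (ltnW Hle) Hix)).
  by apply: Gt'E; rewrite vis_cat Hz.
have CF := C_noF HrejC HEF CE.
have Hy' : y \in vis rho m v \/ y \in vis rho mD t'.
  case: Hy => Hy; first by left.
  move: Hy; rewrite vis_cat Hfv1 vis_cat Ht' => /orP [Hy|/orP [Hy|Hy]].
  - by left; rewrite Hv12 vis_cat Hy.
  - by right.
  - by left; rewrite Hv12 vis_cat Hfv1 Hy orbT.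
case: Hy' => Hy'; last by apply: (Gt' EF HEF Gt'E CE); exists y.
case: (classic (tau y = q)) => Hyq.
  by move: (CF q HqC); rewrite -Hyq HyF.
apply: HnotD; apply/rabin_g_iff; exists EF; split=> //; split.
  by move=> z [Hz _]; apply: HE; left; rewrite Hvis.
by exists y; split=> //; split=> //; rewrite -Hvis.
Qed.
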